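(* For finite asynchronous CCS, let $L_A$ be the set of labels of the transition system $A_I$ of the shape $-$ and $-\mid a.T_1$, for $a$ a channel name and $T_1$ a pure process. Then $L_A$-bisimilarity coincides with asynchronous bisimilarity: $\sim^{L_A}=\sim^A$.
   Context: Finite asynchronous CCS: names $a,b,\dots$; pure processes $P::=M\mid\bar a\mid(\nu a)P\mid P_1|P_2$ with summations $M::=\mathbf{0}\mid\tau.P\mid a.P\mid M_1+M_2$; extended processes also allow process variables $X$. Structural congruence $\equiv$: smallest congruence with $|$ commutative, associative, unit $\mathbf{0}$; $+$ commutative, associative, unit $\mathbf{0}$; $(\nu a)(\nu b)P\equiv(\nu b)(\nu a)P$; $(\nu a)(P|Q)\equiv P|(\nu a)Q$ if $a\notin fn(P)$; $\alpha$-conversion. Reduction $\rightsquigarrow$ (up to $\equiv$): $(a.P+M)|\bar a\rightsquigarrow P$, $\tau.P+M\rightsquigarrow P$, closed under $(\nu a)-$ and $-|R$. Ordinary LTS (up to $\equiv$), $\mu\in\{\tau,a,\bar a\}$: $a.P+M\xrightarrow{a}P$; $\tau.P+M\xrightarrow{\tau}P$; $\bar a\xrightarrow{\bar a}\mathbf{0}$; $P\xrightarrow{\mu}Q$ implies $(\nu a)P\xrightarrow{\mu}(\nu a)Q$ if $a\notin n(\mu)$ and $P|R\xrightarrow{\mu}Q|R$; $P\xrightarrow{a}P_1$, $Q\xrightarrow{\bar a}Q_1$ imply $P|Q\xrightarrow{\tau}P_1|Q_1$ (parallel composition commutative). Asynchronous bisimilarity $\sim^A$ is the largest symmetric relation $\mathcal{R}$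 such that if $P\,\mathcal{R}\,Q$: $P\xrightarrow{\tau}P'$ implies $Q\xrightarrow{\tau}Q'$ with $P'\,\mathcal{R}\,Q'$; $P\xrightarrow{\bar a}P'$ implies $Q\xrightarrow{\bar a}Q'$ with $P'\,\mathcal{R}\,Q'$; $P\xrightarrow{a}P'$ implies either $Q\xrightarrow{a}Q'$ with $P'\,\mathcal{R}\,Q'$ or $Q\xrightarrow{\tau}Q'$ with $P'\,\mathcal{R}\,Q'|\bar a$. The LTS $A$: (Tau) $P\rightsquigarrow Q$ gives $P\xrightarrow{-}Q$; (Rcv) $P\equiv(\nu A)(a.Q+M|R)$, $a\notin A$ gives $P\xrightarrow{-|\bar a}(\nu A)(Q|R)$; (Snd) $P\equiv(\nu A)(\bar a|Q)$, $a\notin A$ gives $P\xrightarrow{-|a.X_1}(\nu A)(Q|X_1)$. $A_I$ instantiates the process variable: $P\xrightarrow{C[-]}_{A_I}Q$ iff $P\xrightarrow{C_\epsilon[-]}Q_\epsilon$ in $A$ and a capture-avoiding substitution $\sigma$ of a pure process for $X_1$ has $Q_\epsilon\sigma\equiv Q$, $C_\epsilon[-]\sigma=C[-]$. For a set $L$ of labels, an $L$-bisimulation is a symmetric relation $\mathcal{R}$ such that if $P\,\mathcal{R}\,Q$ and $P\xrightarrow{C[-]}_{A_I}P'$ then: if $C[-]\in L$, $Q\xrightarrow{C[-]}_{A_I}Q'$ with $P'\,\mathcal{R}\,Q'$; otherwise $C[Q]\rightsquigarrow Q'$ with $P'\,\mathcal{R}\,Q'$. $\sim^L$ is the largest $L$-bisimulation.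 *)

(* Defs.v *)
From Stdlib Require Import List Arith Bool.
Import ListNotations.

Definition name := nat.

Inductive proc : Type :=
| PSum : summ -> proc
| POut : name -> proc
| PNu  : name -> proc -> proc
| PPar : proc -> proc -> proc
| PVar : nat -> proc
with summ : Type :=
| SZero : summ
| STau  : proc -> summ
| SIn   : name -> proc -> summ
| SPlus : summ -> summ -> summ.

Definition PZero : proc := PSum SZero.

Fixpoint pure (P : proc) : Prop :=
  match P with
  | PSum M => pureM M
  | POut _ => True
  | PNu _ P => pure P
  | PPar P Q => pure P /\ pure Q
  | PVar _ => False
  end
with pureM (M : summ) : Prop :=
  match M with
  | SZero => True
  | STau P => pure P
  | SIn _ P => pure P
  | SPlus M1 M2 => pureM M1 /\ pureM M2
  end.

Fixpoint fn (P : proc) : list name :=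
  match P with
  | PSum M => fnM M
  | POut a => [a]
  | PNu a P => filter (fun x => negb (Nat.eqb x a)) (fn P)
  | PPar P Q => fn P ++ fn Q
  | PVar _ => []
  end
with fnM (M : summ) : list name :=
  match M with
  | SZero => []
  | STau P => fn P
  | SIn a P => a :: fn P
  | SPlus M1 M2 => fnM M1 ++ fnM M2
  end.

Definition swapn (a b x : name) : name :=
  if Nat.eqb x a then b else if Nat.eqb x b then a else x.

Fixpoint swap (a b : name) (P : proc) : proc :=
  match P with
  | PSum M => PSum (swapM a b M)
  | POut x => POut (swapn a b x)
  | PNu x P => PNu (swapn a b x) (swap a b P)
  | PPar P Q => PPar (swap a b P) (swap a b Q)
  | PVar i => PVar i
  end
with swapM (a b : name) (M : summ) : summ :=
  match M with
  | SZero => SZero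
  | STau P => STau (swap a b P)
  | SIn x P => SIn (swapn a b x) (swap a b P)
  | SPlus M1 M2 => SPlus (swapM a b M1) (swapM a b M2)
  end.

Definition nus (A : list name) (P : proc) : proc := fold_right PNu P A.

Inductive scong : proc -> proc -> Prop :=
| sc_refl P : scong P P
| sc_sym P Q : scong P Q -> scong Q P
| sc_trans P Q R : scong P Q -> scong Q R -> scong P R
| sc_par_comm P Q : scong (PPar P Q) (PPar Q P)
| sc_par_assoc P Q R : scong (PPar (PPar P Q) R) (PPar P (PPar Q R))
| sc_par_unit P : scong (PPar P PZero) P
| sc_nu_comm a b P : scong (PNu a (PNu b P)) (PNu b (PNu a P))
| sc_scope a P Q : ~ In a (fn P) -> scong (PNu a (PPar P Q)) (PPar P (PNu a Q))
| sc_alpha a b P : ~ In b (fn (PNu a P)) -> scong (PNu a P) (PNu b (swap a b P))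
| sc_sum M M' : scongM M M' -> scong (PSum M) (PSum M')
| sc_nu a P P' : scong P P' -> scong (PNu a P) (PNu a P')
| sc_par P P' Q Q' : scong P P' -> scong Q Q' -> scong (PPar P Q) (PPar P' Q')
with scongM : summ -> summ -> Prop :=
| scM_refl M : scongM M M
| scM_sym M N : scongM M N -> scongM N M
| scM_trans M N K : scongM M N -> scongM N K -> scongM M K
| scM_plus_comm M N : scongM (SPlus M N) (SPlus N M)
| scM_plus_assoc M N K : scongM (SPlus (SPlus M N) K) (SPlus M (SPlus N K))
| scM_plus_unit M : scongM (SPlus M SZero) M
| scM_tau P P' : scong P P' -> scongM (STau P) (STau P')
| scM_in a P P' : scong P P' -> scongM (SIn a P) (SIn a P')
| scM_plus M M' N N' : scongM M M' -> scongM N N' -> scongM (SPlus M N) (SPlus M' N').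

Inductive red : proc -> proc -> Prop :=
| red_comm a P M : red (PPar (PSum (SPlus (SIn a P) M)) (POut a)) P
| red_tau P M : red (PSum (SPlus (STau P) M)) P
| red_nu a P Q : red P Q -> red (PNu a P) (PNu a Q)
| red_par P Q R : red P Q -> red (PPar P R) (PPar Q R)
| red_struct P P' Q' Q : scong P P' -> red P' Q' -> scong Q' Q -> red P Q.

Inductive act : Type := ATau | AIn (a : name) | AOut (a : name).

Definition act_names (mu : act) : list name :=
  match mu with ATau => [] | AIn a => [a] | AOut a => [a] end.

Inductive lts : proc -> act -> proc -> Prop :=
| lts_in a P M : lts (PSum (SPlus (SIn a P) M)) (AIn a) P
| lts_tau P M : lts (PSum (SPlus (STau P) M)) ATau P
| lts_out a : lts (POut a) (AOut a) PZero
| lts_nu a mu P Q : lts P mu Q -> ~ In a (act_names mu) -> lts (PNu a P) mu (PNu a Q)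
| lts_par mu P Q R : lts P mu Q -> lts (PPar P R) mu (PPar Q R)
| lts_comm a P P1 Q Q1 :
    lts P (AIn a) P1 -> lts Q (AOut a) Q1 -> lts (PPar P Q) ATau (PPar P1 Q1)
| lts_struct P P' mu Q' Q : scong P P' -> lts P' mu Q' -> scong Q' Q -> lts P mu Q.

Definition symmetric_rel (R : proc -> proc -> Prop) : Prop :=
  forall P Q, R P Q -> R Q P.

Definition async_bisim (R : proc -> proc -> Prop) : Prop :=
  symmetric_rel R /\
  forall P Q, R P Q ->
    (forall P', lts P ATau P' -> exists Q', lts Q ATau Q' /\ R P' Q') /\
    (forall a P', lts P (AOut a) P' -> exists Q', lts Q (AOut a) Q' /\ R P' Q') /\
    (forall a P', lts P (AIn a) P' ->
       (exists Q', lts Q (AIn a) Q' /\ R P' Q') \/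
       (exists Q', lts Q ATau Q' /\ R P' (PPar Q' (POut a)))).

Definition async_bisimilar (P Q : proc) : Prop :=
  exists R, async_bisim R /\ R P Q.

(** Labels (contexts) of the LTS A / A_I *)
Inductive ctx : Type :=
| CHole : ctx
| COut : name -> ctx
| CIn : name -> proc -> ctx.

Definition apply_ctx (C : ctx) (P : proc) : proc :=
  match C with
  | CHole => P
  | COut a => PPar P (POut a)
  | CIn a T => PPar P (PSum (SIn a T))
  end.

(** The LTS A, on extended processes; X_1 is PVar 1. *)
Inductive ltsA : proc -> ctx -> proc -> Prop :=
| ltsA_tau P Q : red P Q -> ltsA P CHole Q
| ltsA_rcv P A a Q M R :
    scong P (nus A (PPar (PSum (SPlus (SIn a Q) M)) R)) -> ~ In a A ->
    ltsA P (COut a) (nus A (PPar Q R))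
| ltsA_snd P A a Q :
    scong P (nus A (PPar (POut a) Q)) -> ~ In a A ->
    ltsA P (CIn a (PVar 1)) (nus A (PPar Q (PVar 1))).

Fixpoint occurs (x : nat) (P : proc) : bool :=
  match P with
  | PSum M => occursM x M
  | POut _ => false
  | PNu _ P => occurs x P
  | PPar P Q => occurs x P || occurs x Q
  | PVar i => Nat.eqb i x
  end
with occursM (x : nat) (M : summ) : bool :=
  match M with
  | SZero => false
  | STau P => occurs x P
  | SIn _ P => occurs x P
  | SPlus M1 M2 => occursM x M1 || occursM x M2
  end.

(** Capture-avoiding substitution of T for X_x: undefined (None) when a
    binder would capture a free name of T (alpha-conversion is available
    through structural congruence). *)
Fixpoint subst (T : proc) (x : nat) (P : proc) : option proc :=
  match P with
  | PSum M => option_map PSum (substM T x M)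
  | POut a => Some (POut a)
  | PNu a P0 =>
      if existsb (Nat.eqb a) (fn T) && occurs x P0 then None
      else option_map (PNu a) (subst T x P0)
  | PPar P1 P2 =>
      match subst T x P1, subst T x P2 with
      | Some P1', Some P2' => Some (PPar P1' P2')
      | _, _ => None
      end
  | PVar i => if Nat.eqb i x then Some T else Some (PVar i)
  end
with substM (T : proc) (x : nat) (M : summ) : option summ :=
  match M with
  | SZero => Some SZero
  | STau P => option_map STau (subst T x P)
  | SIn a P => option_map (SIn a) (subst T x P)
  | SPlus M1 M2 =>
      match substM T x M1, substM T x M2 with
      | Some M1', Some M2' => Some (SPlus M1' M2')
      | _, _ => None
      end
  end.

Definition subst_ctx (T : proc) (x : nat) (C : ctx) : option ctx :=
  match C with
  | CHole => Some CHole
  | COut a => Some (COut a)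
  | CIn a U => option_map (CIn a) (subst T x U)
  end.

Definition ltsAI (P : proc) (C : ctx) (Q : proc) : Prop :=
  exists Ce Qe T Qs,
    ltsA P Ce Qe /\ pure T /\
    subst T 1 Qe = Some Qs /\ scong Qs Q /\
    subst_ctx T 1 Ce = Some C.

Definition L_bisim (L : ctx -> Prop) (R : proc -> proc -> Prop) : Prop :=
  symmetric_rel R /\
  forall P Q C P', R P Q -> ltsAI P C P' ->
    (L C -> exists Q', ltsAI Q C Q' /\ R P' Q') /\
    (~ L C -> exists Q', red (apply_ctx C Q) Q' /\ R P' Q').

Definition L_bisimilar (L : ctx -> Prop) (P Q : proc) : Prop :=
  exists R, L_bisim L R /\ R P Q.

Definition LA (C : ctx) : Prop :=
  C = CHole \/ exists a T, pure T /\ C = CIn a T.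

(* Main.v *)
Require Import Defs.
From Stdlib Require Import List Arith Bool Lia.
Import ListNotations.

Scheme proc_ind2 := Induction for proc Sort Prop
with summ_ind2 := Induction for summ Sort Prop.
Combined Scheme proc_summ_ind from proc_ind2, summ_ind2.
Scheme scong_ind2 := Induction for scong Sort Prop
with scongM_ind2 := Induction for scongM Sort Prop.
Combined Scheme scong_mut from scong_ind2, scongM_ind2.

Ltac sw := unfold swapn in *; repeat match goal with
 | |- context[Nat.eqb ?u ?v] => destruct (Nat.eqb_spec u v)
 | H: context[Nat.eqb ?u ?v] |- _ => destruct (Nat.eqb_spec u v)
 end; subst; try lia; try congruence.

Lemma swapn_inv a b x : swapn a b (swapn a b x) = x.
Proof. sw. Qed.
Lemma swapn_inj a b x y : swapn a b x = swapn a b y -> x = y.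
Proof. intro H. rewrite <- (swapn_inv a b x), <- (swapn_inv a b y), H. reflexivity. Qed.
Lemma swapn_id a b x : x <> a -> x <> b -> swapn a b x = x.
Proof. intros; sw. Qed.
Lemma swapn_eqb a b x y : Nat.eqb (swapn a b x) (swapn a b y) = Nat.eqb x y.
Proof.
  destruct (Nat.eqb_spec x y); subst. apply Nat.eqb_refl.
  apply Nat.eqb_neq. intro H; apply swapn_inj in H; auto.
Qed.

Lemma swap_inv a b : (forall P, swap a b (swap a b P) = P) /\ (forall M, swapM a b (swapM a b M) = M).
Proof.
  apply proc_summ_ind; intros; simpl; rewrite ?swapn_inv; congruence.
Qed.

Lemma filter_map_sw a b n l :
  filter (fun x => negb (Nat.eqb x (swapn a b n))) (map (swapn a b) l) =
  map (swapn a b) (filter (fun x => negb (Nat.eqb x n)) l).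
Proof.
  induction l; simpl; auto. rewrite swapn_eqb. destruct (Nat.eqb a0 n); simpl; rewrite IHl; reflexivity.
Qed.

Lemma fn_swap a b : (forall P, fn (swap a b P) = map (swapn a b) (fn P)) /\
  (forall M, fnM (swapM a b M) = map (swapn a b) (fnM M)).
Proof.
  apply proc_summ_ind; intros; simpl; auto.
  - rewrite H. apply filter_map_sw.
  - rewrite H, H0, map_app; auto.
  - rewrite H; auto.
  - rewrite H, H0, map_app; auto.
Qed.

Lemma pure_swap a b : (forall P, pure (swap a b P) <-> pure P) /\
  (forall M, pureM (swapM a b M) <-> pureM M).
Proof.
  apply proc_summ_ind; intros; simpl; try tauto.
Qed.

Definition fresh (l : list nat) := S (list_max l).
Lemma in_le_max x l : In x l -> x <= list_max l.
Proof. induction l; simpl; [tauto|]. intros [H|H]; subst; try lia. specialize (IHl H). lia. Qed.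
Lemma fresh_notin l : ~ In (fresh l) l.
Proof. intro H. apply in_le_max in H. unfold fresh in H. lia. Qed.

Lemma in_filter_neq x a l : In x (filter (fun y => negb (Nat.eqb y a)) l) <-> In x l /\ x <> a.
Proof. rewrite filter_In. destruct (Nat.eqb_spec x a); simpl; intuition congruence. Qed.

Lemma scong_fn : (forall P Q, scong P Q -> forall x, In x (fn P) <-> In x (fn Q)) /\
  (forall M N, scongM M N -> forall x, In x (fnM M) <-> In x (fnM N)).
Proof.
  apply scong_mut; intros; simpl in *;
   repeat rewrite ?in_app_iff, ?in_filter_neq in *; try tauto.
  all: try (repeat match goal with H: forall x, _ <-> _ |- _ => specialize (H x) end;
            simpl in *; intuition (subst; auto; tauto); fail).
    rewrite (proj1 (fn_swap a b)), in_map_iff.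
    split.
    + intros [H1 H2]. split; [exists x; split; auto|].
      apply swapn_id; auto. intro; subst; tauto. intro; subst; tauto.
    + intros [[y [H1 H2]] H3]. subst x.
      destruct (Nat.eqb_spec y a); subst.
      * unfold swapn in H3; rewrite Nat.eqb_refl in H3; congruence.
      * destruct (Nat.eqb_spec y b); subst.
        -- exfalso; tauto.
        -- rewrite swapn_id; auto.
Qed.

Lemma scong_pure : (forall P Q, scong P Q -> (pure P <-> pure Q)) /\
  (forall M N, scongM M N -> (pureM M <-> pureM N)).
Proof.
  apply scong_mut; intros; simpl in *; try tauto.
  rewrite (proj1 (pure_swap a b)). tauto.
Qed.

Inductive st : proc -> act -> proc -> Prop :=
| st_sum M mu P : stM M mu P -> st (PSum M) mu P
| st_out a : st (POut a) (AOut a) PZero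
| st_nu a mu P Q : st P mu Q -> ~ In a (act_names mu) -> st (PNu a P) mu (PNu a Q)
| st_parl mu P P' Q : st P mu P' -> st (PPar P Q) mu (PPar P' Q)
| st_parr mu P Q Q' : st Q mu Q' -> st (PPar P Q) mu (PPar P Q')
| st_comml a P P' Q Q' : st P (AIn a) P' -> st Q (AOut a) Q' -> st (PPar P Q) ATau (PPar P' Q')
| st_commr a P P' Q Q' : st P (AOut a) P' -> st Q (AIn a) Q' -> st (PPar P Q) ATau (PPar P' Q')
with stM : summ -> act -> proc -> Prop :=
| stM_tau P : stM (STau P) ATau P
| stM_in a P : stM (SIn a P) (AIn a) P
| stM_l M N mu P : stM M mu P -> stM (SPlus M N) mu P
| stM_r M N mu P : stM N mu P -> stM (SPlus M N) mu P.

Scheme st_ind2 := Induction for st Sort Prop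
with stM_ind2 := Induction for stM Sort Prop.
Combined Scheme st_mut from st_ind2, stM_ind2.

Lemma st_fn : (forall P mu P', st P mu P' ->
   (forall x, In x (act_names mu) -> In x (fn P)) /\ (forall x, In x (fn P') -> In x (fn P))) /\
  (forall M mu P', stM M mu P' ->
   (forall x, In x (act_names mu) -> In x (fnM M)) /\ (forall x, In x (fn P') -> In x (fnM M))).
Proof.
  apply st_mut; intros; simpl in *; repeat rewrite ?in_app_iff, ?in_filter_neq in *;
   try (split; intros; intuition (subst; auto); fail).
  all: repeat match goal with H: _ /\ _ |- _ => destruct H end.
  all: split; intros y Hy; repeat rewrite ?in_app_iff, ?in_filter_neq in *; simpl in *.
  all: try (split; [|intro; subst]; eauto; fail).
  all: try (destruct Hy as [Hy Hy']; split; eauto; fail).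
  all: repeat match goal with H: forall x, In x [?a] -> _ |- _ => specialize (H a (or_introl eq_refl)) end.
  all: try tauto; intuition (subst; eauto).
Qed.

Definition swap_act a b mu :=
  match mu with ATau => ATau | AIn x => AIn (swapn a b x) | AOut x => AOut (swapn a b x) end.

Lemma st_swap a b : (forall P mu P', st P mu P' -> st (swap a b P) (swap_act a b mu) (swap a b P')) /\
  (forall M mu P', stM M mu P' -> stM (swapM a b M) (swap_act a b mu) (swap a b P')).
Proof.
  apply st_mut; intros; simpl in *; try (econstructor; eauto; fail).
  - constructor; auto. destruct mu; simpl in *; auto;
    intros [E|E]; auto; apply swapn_inj in E; auto.
Qed.

Lemma swap_act_id a b mu : (forall x, In x (act_names mu) -> x <> a /\ x <> b) -> swap_act a b mu = mu.
Proof. destruct mu; simpl; intros H; auto; destruct (H a0); auto; rewrite swapn_id; auto. Qed.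

Hint Constructors st stM : stdb.

Ltac inv_st := unfold PZero in *; repeat match goal with
 | H : st (PPar _ _) _ _ |- _ => inversion H; subst; clear H
 | H : st (PNu _ _) _ _ |- _ => inversion H; subst; clear H
 | H : st (PSum _) _ _ |- _ => inversion H; subst; clear H
 | H : st (POut _) _ _ |- _ => inversion H; subst; clear H
 | H : stM (SPlus _ _) _ _ |- _ => inversion H; subst; clear H
 | H : stM SZero _ _ |- _ => inversion H
 | H : stM (STau _) _ _ |- _ => inversion H; subst; clear H
 | H : stM (SIn _ _) _ _ |- _ => inversion H; subst; clear H
 end.

Definition sim P Q := forall mu P', st P mu P' -> exists Q', st Q mu Q' /\ scong P' Q'.
Definition simM M N := forall mu P', stM M mu P' -> exists Q', stM N mu Q' /\ scong P' Q'.

Lemma sim_refl P : sim P P.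
Proof. intros mu P' H; eauto using sc_refl. Qed.
Lemma simM_refl M : simM M M.
Proof. intros mu P' H; eauto using sc_refl. Qed.
Lemma sim_trans P Q R : sim P Q -> sim Q R -> sim P R.
Proof. intros H1 H2 mu P' H. destruct (H1 _ _ H) as [Q' [H3 H4]].
  destruct (H2 _ _ H3) as [R' [H5 H6]]. eauto using sc_trans. Qed.
Lemma simM_trans P Q R : simM P Q -> simM Q R -> simM P R.
Proof. intros H1 H2 mu P' H. destruct (H1 _ _ H) as [Q' [H3 H4]].
  destruct (H2 _ _ H3) as [R' [H5 H6]]. eauto using sc_trans. Qed.

Lemma sim_par_comm P Q : sim (PPar P Q) (PPar Q P).
Proof. intros mu X H; inv_st; eexists; split; eauto with stdb; apply sc_par_comm. Qed.
Lemma sim_assoc1 P Q R : sim (PPar (PPar P Q) R) (PPar P (PPar Q R)).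
Proof. intros mu X H; inv_st; eexists; split; eauto 7 with stdb; apply sc_par_assoc. Qed.
Lemma sim_assoc2 P Q R : sim (PPar P (PPar Q R)) (PPar (PPar P Q) R).
Proof. intros mu X H; inv_st; eexists; split; eauto 7 with stdb; apply sc_sym, sc_par_assoc. Qed.
Lemma sim_unit1 P : sim (PPar P PZero) P.
Proof. intros mu X H; inv_st; eexists; split; eauto with stdb; apply sc_par_unit. Qed.
Lemma sim_unit2 P : sim P (PPar P PZero).
Proof. intros mu X H; eexists; split; eauto with stdb; apply sc_sym, sc_par_unit. Qed.
Lemma sim_nucomm a b P : sim (PNu a (PNu b P)) (PNu b (PNu a P)).
Proof. intros mu X H; inv_st; eexists; split; eauto with stdb; apply sc_nu_comm. Qed.

Lemma st_fn1 P mu P' x : st P mu P' -> In x (act_names mu) -> In x (fn P).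
Proof. intros H; apply (proj1 st_fn _ _ _ H). Qed.
Lemma st_fn2 P mu P' x : st P mu P' -> In x (fn P') -> In x (fn P).
Proof. intros H; apply (proj1 st_fn _ _ _ H). Qed.

Lemma sim_scope1 a P Q : ~In a (fn P) -> sim (PNu a (PPar P Q)) (PPar P (PNu a Q)).
Proof.
  intros Ha mu X H; inv_st.
  - eexists; split; [eauto with stdb|]. apply sc_scope. intro; eauto using st_fn2.
  - eexists; split; [eauto with stdb|]. apply sc_scope; auto.
  - eexists; split. eapply st_comml; eauto. econstructor; [eassumption|].
    simpl; intros [E|E]; auto; subst. eauto using st_fn1, in_eq.
    apply sc_scope. intro; eauto using st_fn2.
  - eexists; split. eapply st_commr; eauto. econstructor; [eassumption|].
    simpl; intros [E|E]; auto; subst. eauto using st_fn1, in_eq.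
    apply sc_scope. intro; eauto using st_fn2.
Qed.

Lemma sim_scope2 a P Q : ~In a (fn P) -> sim (PPar P (PNu a Q)) (PNu a (PPar P Q)).
Proof.
  intros Ha mu X H; inv_st.
  - eexists; split. constructor. eauto with stdb. intro; eauto using st_fn1.
    apply sc_sym, sc_scope. intro; eauto using st_fn2.
  - eexists; split. constructor. eauto with stdb. auto.
    apply sc_sym, sc_scope; auto.
  - eexists; split. constructor. eauto with stdb. simpl; tauto.
    apply sc_sym, sc_scope. intro; eauto using st_fn2.
  - eexists; split. constructor. eauto with stdb. simpl; tauto.
    apply sc_sym, sc_scope. intro; eauto using st_fn2.
Qed.


Lemma sim_alpha1 a b P : ~In b (fn (PNu a P)) -> sim (PNu a P) (PNu b (swap a b P)).
Proof.
  intros Hb mu X H; inv_st. simpl in Hb. rewrite in_filter_neq in Hb.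
  match goal with Hs : st P mu ?Y |- _ => rename Hs into H3 end.
  assert (Hm : swap_act a b mu = mu).
  { apply swap_act_id. intros x Hx. split. intro; subst; tauto.
    intro; subst. apply Hb. split. eauto using st_fn1. intro; subst; tauto. }
  exists (PNu b (swap a b Q)); split.
  - constructor. pose proof (proj1 (st_swap a b) _ _ _ H3) as Hs. rewrite Hm in Hs. exact Hs.
    intro Hx. apply Hb. split. eauto using st_fn1. intro; subst; tauto.
  - apply sc_alpha. simpl. rewrite in_filter_neq. intros [H1 H2]. apply Hb. split; eauto using st_fn2.
Qed.

Lemma sim_alpha2 a b P : ~In b (fn (PNu a P)) -> sim (PNu b (swap a b P)) (PNu a P).
Proof.
  intros Hb mu X H; inv_st. simpl in Hb. rewrite in_filter_neq in Hb.
  match goal with Hs : st (swap a b P) mu ?Z |- _ => rename Hs into H3; rename Z into Y end.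
  assert (Hn : forall x, In x (act_names mu) -> x <> a /\ x <> b).
  { intros x Hx. pose proof (st_fn1 _ _ _ _ H3 Hx) as Hf.
    rewrite (proj1 (fn_swap a b)), in_map_iff in Hf. destruct Hf as [y [E Hy]]. subst x.
    destruct (Nat.eqb_spec y a); subst.
    - unfold swapn in Hx |- *; rewrite Nat.eqb_refl in *. tauto.
    - destruct (Nat.eqb_spec y b); subst.
      + exfalso; tauto.
      + rewrite swapn_id; auto. }
  assert (Hm : swap_act a b mu = mu) by (apply swap_act_id; auto).
  pose proof (proj1 (st_swap a b) _ _ _ H3) as Hs. rewrite (proj1 (swap_inv a b)), Hm in Hs.
  eexists; split.
  - constructor. eauto. intro Hx; destruct (Hn _ Hx); auto.
  - apply sc_sym. pattern Y at 2. rewrite <- (proj1 (swap_inv a b) Y).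
    apply sc_alpha. simpl. rewrite in_filter_neq. intros [H1 H2].
    rewrite (proj1 (fn_swap a b)), in_map_iff in H1. destruct H1 as [z [E Hz]].
    pose proof (st_fn2 _ _ _ _ H3 Hz) as Hz'.
    rewrite (proj1 (fn_swap a b)), in_map_iff in Hz'. destruct Hz' as [w [E' Hw]]. subst.
    rewrite swapn_inv in E. subst. apply Hb. split; auto.
Qed.

Lemma sim_nu a P Q : sim P Q -> sim (PNu a P) (PNu a Q).
Proof. intros HS mu X H; inv_st. match goal with Hs : st P mu _ |- _ => destruct (HS _ _ Hs) as [Q' [Ha Hb]] end.
  exists (PNu a Q'); split; eauto with stdb. apply sc_nu; auto. Qed.

Lemma sim_par P P' Q Q' : scong P P' -> scong Q Q' -> sim P P' -> sim Q Q' -> sim (PPar P Q) (PPar P' Q').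
Proof.
  intros E1 E2 H1 H2 mu X H; inv_st;
  repeat match goal with
  | H : st P _ _ |- _ => destruct (H1 _ _ H) as [? [? ?]]; clear H
  | H : st Q _ _ |- _ => destruct (H2 _ _ H) as [? [? ?]]; clear H
  end; eexists; split; eauto with stdb; apply sc_par; auto using sc_refl.
Qed.

Lemma sim_sum M N : simM M N -> sim (PSum M) (PSum N).
Proof. intros HS mu X H; inv_st. match goal with Hs : stM M mu _ |- _ => destruct (HS _ _ Hs) as [Q' [Ha Hb]] end. eauto with stdb. Qed.

Lemma simM_comm M N : simM (SPlus M N) (SPlus N M).
Proof. intros mu X H; inv_st; eexists; split; eauto with stdb; apply sc_refl. Qed.
Lemma simM_assoc1 M N K : simM (SPlus (SPlus M N) K) (SPlus M (SPlus N K)).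
Proof. intros mu X H; inv_st; eexists; split; eauto with stdb; apply sc_refl. Qed.
Lemma simM_assoc2 M N K : simM (SPlus M (SPlus N K)) (SPlus (SPlus M N) K).
Proof. intros mu X H; inv_st; eexists; split; eauto with stdb; apply sc_refl. Qed.
Lemma simM_unit1 M : simM (SPlus M SZero) M.
Proof. intros mu X H; inv_st; eexists; split; eauto with stdb; apply sc_refl. Qed.
Lemma simM_unit2 M : simM M (SPlus M SZero).
Proof. intros mu X H; eexists; split; eauto with stdb; apply sc_refl. Qed.
Lemma simM_tau P P' : scong P P' -> simM (STau P) (STau P').
Proof. intros HS mu X H; inv_st; eexists; split; eauto with stdb. Qed.
Lemma simM_in a P P' : scong P P' -> simM (SIn a P) (SIn a P').
Proof. intros HS mu X H; inv_st; eexists; split; eauto with stdb. Qed.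
Lemma simM_plus M M' N N' : simM M M' -> simM N N' -> simM (SPlus M N) (SPlus M' N').
Proof.
  intros H1 H2 mu X H; inv_st.
  - match goal with Hs : stM M mu _ |- _ => destruct (H1 _ _ Hs) as [? [? ?]] end; eauto with stdb.
  - match goal with Hs : stM N mu _ |- _ => destruct (H2 _ _ Hs) as [? [? ?]] end; eauto with stdb.
Qed.

Lemma scong_sim : (forall P Q, scong P Q -> sim P Q /\ sim Q P) /\
  (forall M N, scongM M N -> simM M N /\ simM N M).
Proof.
  apply scong_mut; intros; try (destruct H); try (destruct H0);
  eauto 6 using sim_refl, simM_refl, sim_trans, simM_trans, sim_par_comm, sim_assoc1, sim_assoc2,
    sim_unit1, sim_unit2, sim_nucomm, sim_scope1, sim_scope2, sim_alpha1, sim_alpha2, sim_nu, sim_par,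
    sim_sum, simM_comm, simM_assoc1, simM_assoc2, simM_unit1, simM_unit2, simM_tau, simM_in, simM_plus, sc_sym.
Qed.

Lemma stM_rearr M mu P : stM M mu P -> exists pre M', scongM M (SPlus pre M') /\
  ((pre = STau P /\ mu = ATau) \/ (exists a, pre = SIn a P /\ mu = AIn a)).
Proof.
  induction 1.
  - exists (STau P), SZero. split; auto. apply scM_sym, scM_plus_unit.
  - exists (SIn a P), SZero. split; eauto. apply scM_sym, scM_plus_unit.
  - destruct IHstM as [pre [M' [H1 H2]]]. exists pre, (SPlus M' N). split; auto.
    eapply scM_trans. apply scM_plus. apply H1. apply scM_refl. apply scM_plus_assoc.
  - destruct IHstM as [pre [M' [H1 H2]]]. exists pre, (SPlus M' M). split; auto.
    eapply scM_trans. apply scM_plus_comm.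
    eapply scM_trans. apply scM_plus. apply H1. apply scM_refl. apply scM_plus_assoc.
Qed.

Lemma st_lts P mu P' : st P mu P' -> lts P mu P'.
Proof.
  induction 1.
  - destruct (stM_rearr _ _ _ H) as [pre [M' [H1 [[-> ->]|[a [-> ->]]]]]].
    + eapply lts_struct. apply sc_sum, H1. apply lts_tau. apply sc_refl.
    + eapply lts_struct. apply sc_sum, H1. apply lts_in. apply sc_refl.
  - apply lts_out.
  - apply lts_nu; auto.
  - apply lts_par; auto.
  - eapply lts_struct. apply sc_par_comm. apply lts_par; eauto. apply sc_par_comm.
  - eapply lts_comm; eauto.
  - eapply lts_struct. apply sc_par_comm. eapply lts_comm; eauto. apply sc_par_comm.
Qed.

Lemma lts_st P mu P' : lts P mu P' -> exists P'', st P mu P'' /\ scong P'' P'.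
Proof.
  induction 1.
  - eexists; split; [eauto with stdb | apply sc_refl].
  - eexists; split; [eauto with stdb | apply sc_refl].
  - eexists; split; [eauto with stdb | apply sc_refl].
  - destruct IHlts as [X [H1 H2]]. exists (PNu a X); split; eauto with stdb. apply sc_nu; auto.
  - destruct IHlts as [X [H1 H2]]. exists (PPar X R); split; eauto with stdb. apply sc_par; auto using sc_refl.
  - destruct IHlts1 as [X [H1 H2]]. destruct IHlts2 as [Y [H3 H4]].
    exists (PPar X Y); split; eauto with stdb. apply sc_par; auto.
  - destruct IHlts as [X [H2 H3]].
    destruct (proj1 scong_sim _ _ H) as [_ HS].
    destruct (HS _ _ H2) as [Y [H4 H5]].
    exists Y; split; auto. eapply sc_trans. apply sc_sym, H5. eapply sc_trans. apply H3. apply H1.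
Qed.

Lemma red_lts P Q : red P Q -> lts P ATau Q.
Proof.
  induction 1.
  - eapply lts_struct. apply sc_refl. eapply lts_comm. apply lts_in. apply lts_out. apply sc_par_unit.
  - apply lts_tau.
  - apply lts_nu; simpl; auto.
  - apply lts_par; auto.
  - eapply lts_struct; eauto.
Qed.

Lemma stM_no_out M mu P : stM M mu P -> forall a, mu <> AOut a.
Proof. induction 1; congruence || auto. Qed.

Lemma st_out_inv Q mu Q' : st Q mu Q' -> forall a, mu = AOut a -> scong Q (PPar Q' (POut a)).
Proof.
  induction 1; intros b E; subst; try discriminate.
  - exfalso; eapply stM_no_out; eauto.
  - injection E; intros; subst. eapply sc_trans. apply sc_sym, sc_par_unit. apply sc_par_comm.
  - specialize (IHst b eq_refl). simpl in H0.
    eapply sc_trans. apply sc_nu, IHst. eapply sc_trans. apply sc_nu, sc_par_comm.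
    eapply sc_trans. apply sc_scope. simpl; intuition. apply sc_par_comm.
  - specialize (IHst b eq_refl).
    eapply sc_trans. apply sc_par. apply IHst. apply sc_refl.
    eapply sc_trans. apply sc_par_assoc. eapply sc_trans. apply sc_par. apply sc_refl. apply sc_par_comm.
    apply sc_sym, sc_par_assoc.
  - specialize (IHst b eq_refl).
    eapply sc_trans. apply sc_par. apply sc_refl. apply IHst. apply sc_sym, sc_par_assoc.
Qed.

Lemma st_in_red P mu P' : st P mu P' -> forall a, mu = AIn a -> red (PPar P (POut a)) P'.
Proof.
  induction 1; intros b E; subst; try discriminate.
  - destruct (stM_rearr _ _ _ H) as [pre [M' [H1 [[-> E']|[a [-> E']]]]]]; try discriminate.
    injection E'; intros; subst.
    eapply red_struct. apply sc_par. apply sc_sum, H1. apply sc_refl. apply red_comm. apply sc_refl.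
  - specialize (IHst b eq_refl). simpl in H0.
    eapply red_struct. 2: apply red_nu, IHst. 2: apply sc_refl.
    eapply sc_trans. apply sc_par_comm. eapply sc_trans. apply sc_sym, sc_scope. simpl; intuition.
    apply sc_nu, sc_par_comm.
  - specialize (IHst b eq_refl).
    eapply red_struct. 2: apply red_par, IHst. 2: apply sc_refl.
    eapply sc_trans. apply sc_par_assoc. eapply sc_trans. apply sc_par. apply sc_refl. apply sc_par_comm.
    apply sc_sym, sc_par_assoc.
  - specialize (IHst b eq_refl).
    eapply red_struct. 2: apply red_par, IHst. 2: apply sc_par_comm.
    eapply sc_trans. apply sc_par_assoc. apply sc_par_comm.
Qed.

Lemma st_tau_red P mu P' : st P mu P' -> mu = ATau -> red P P'.
Proof.
  induction 1; intros E; subst; try discriminate.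
  - destruct (stM_rearr _ _ _ H) as [pre [M' [H1 [[-> _]|[a [-> E']]]]]]; try discriminate.
    eapply red_struct. apply sc_sum, H1. apply red_tau. apply sc_refl.
  - apply red_nu; auto.
  - apply red_par; auto.
  - eapply red_struct. apply sc_par_comm. apply red_par; auto. apply sc_par_comm.
  - pose proof (st_out_inv _ _ _ H0 a eq_refl).
    pose proof (st_in_red _ _ _ H a eq_refl) as HR.
    apply red_struct with (PPar (PPar P (POut a)) Q') (PPar P' Q').
    eapply sc_trans. apply sc_par. apply sc_refl. apply H1.
    eapply sc_trans. apply sc_par. apply sc_refl. apply sc_par_comm. apply sc_sym, sc_par_assoc.
    apply red_par; auto. apply sc_refl.
  - pose proof (st_out_inv _ _ _ H a eq_refl).
    pose proof (st_in_red _ _ _ H0 a eq_refl) as HR.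
    apply red_struct with (PPar (PPar Q (POut a)) P') (PPar Q' P').
    eapply sc_trans. apply sc_par_comm.
    eapply sc_trans. apply sc_par. apply sc_refl. apply H1.
    eapply sc_trans. apply sc_par. apply sc_refl. apply sc_par_comm. apply sc_sym, sc_par_assoc.
    apply red_par; auto. apply sc_par_comm.
Qed.

Lemma lts_red P Q : lts P ATau Q -> red P Q.
Proof. intros H. destruct (lts_st _ _ _ H) as [X [H1 H2]].
  eapply red_struct. apply sc_refl. eapply st_tau_red; eauto. auto. Qed.

Lemma lts_out_inv Q a Q' : lts Q (AOut a) Q' -> scong Q (PPar Q' (POut a)).
Proof. intros H. destruct (lts_st _ _ _ H) as [X [H1 H2]].
  eapply sc_trans. eapply st_out_inv; eauto. apply sc_par; auto using sc_refl. Qed.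

Lemma lts_in_red P a P' : lts P (AIn a) P' -> red (PPar P (POut a)) P'.
Proof. intros H. destruct (lts_st _ _ _ H) as [X [H1 H2]].
  eapply red_struct. apply sc_refl. eapply st_in_red; eauto. auto. Qed.

Lemma lts_pure P mu Q : lts P mu Q -> pure P -> pure Q.
Proof.
  induction 1; simpl; intros; try tauto.
  - apply (proj1 scong_pure _ _ H1). apply IHlts. apply (proj1 scong_pure _ _ H). auto.
Qed.

Lemma red_pure P Q : red P Q -> pure P -> pure Q.
Proof. intros H; apply lts_pure with ATau; apply red_lts; auto. Qed.

Lemma occurs_pure x : (forall P, pure P -> occurs x P = false) /\ (forall M, pureM M -> occursM x M = false).
Proof. apply proc_summ_ind; simpl; intros; try tauto; auto;
  repeat match goal with H : _ /\ _ |- _ => destruct H end;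
  try (rewrite H, H0; auto). Qed.

Lemma subst_pure T x : (forall P, pure P -> subst T x P = Some P) /\ (forall M, pureM M -> substM T x M = Some M).
Proof. apply proc_summ_ind; simpl; intros; try tauto; auto;
  repeat match goal with H : _ /\ _ |- _ => destruct H end.
  - rewrite H; auto.
  - rewrite (proj1 (occurs_pure x)), andb_false_r; auto. rewrite H; auto.
  - rewrite H, H0; auto.
  - rewrite H; auto.
  - rewrite H; auto.
  - rewrite H, H0; auto.
Qed.

Lemma pure_nus A X : pure (nus A X) <-> pure X.
Proof. induction A; simpl; tauto. Qed.

Lemma scong_nus A X Y : scong X Y -> scong (nus A X) (nus A Y).
Proof. induction A; simpl; auto using sc_nu. Qed.

Lemma nus_par A X R : (forall x, In x A -> ~In x (fn R)) -> scong (PPar (nus A X) R) (nus A (PPar X R)).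
Proof.
  induction A; simpl; intros H. apply sc_refl.
  eapply sc_trans. apply sc_par_comm. eapply sc_trans. apply sc_sym, sc_scope. auto.
  apply sc_nu. eapply sc_trans. apply sc_par_comm. auto.
Qed.

Lemma lts_nus A X mu Y : lts X mu Y -> (forall x, In x A -> ~In x (act_names mu)) -> lts (nus A X) mu (nus A Y).
Proof. induction A; simpl; intros; auto. apply lts_nu; auto. Qed.

Lemma occurs_nus_var A Q0 : occurs 1 (nus A (PPar Q0 (PVar 1))) = true.
Proof. induction A; simpl; auto. rewrite orb_true_r; auto. Qed.

Lemma subst_nus_var A Q0 T Qs : pure Q0 -> subst T 1 (nus A (PPar Q0 (PVar 1))) = Some Qs ->
  Qs = nus A (PPar Q0 T) /\ forall x, In x A -> ~In x (fn T).
Proof.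
  revert Qs; induction A; simpl; intros Qs HQ H.
  - rewrite (proj1 (subst_pure T 1)) in H; auto. injection H; auto.
  - rewrite occurs_nus_var, andb_true_r in H.
    destruct (existsb (Nat.eqb a) (fn T)) eqn:E; try discriminate.
    destruct (subst T 1 (nus A (PPar Q0 (PVar 1)))) eqn:E2; simpl in H; try discriminate.
    injection H; intros; subst. destruct (IHA p HQ eq_refl) as [-> H2]. split; auto.
    intros x [->|Hx]; auto. intro Hin.
    assert (existsb (Nat.eqb x) (fn T) = true) by (apply existsb_exists; exists x; split; auto; apply Nat.eqb_refl).
    congruence.
Qed.

Lemma ltsAI_cases P C P' : ltsAI P C P' -> C = CHole \/ (exists a, C = COut a) \/ (exists a T, C = CIn a T /\ pure T).
Proof.
  intros [Ce [Qe [T [Qs [H1 [H2 [H3 [H4 H5]]]]]]]].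
  destruct H1; simpl in H5; injection H5; intros; subst; eauto 7.
Qed.

Lemma ltsAI_CHole P P' : pure P -> ltsAI P CHole P' -> red P P' /\ pure P'.
Proof.
  intros HP [Ce [Qe [T [Qs [H1 [H2 [H3 [H4 H5]]]]]]]].
  destruct H1; simpl in H5; try discriminate.
  - assert (pure Q) by (eapply red_pure; eauto).
    rewrite (proj1 (subst_pure T 1)) in H3; auto. injection H3; intros; subst.
    split. eapply red_struct; eauto using sc_refl. apply (proj1 scong_pure _ _ H4); auto.
Qed.

Lemma red_ltsAI P P' : red P P' -> pure P -> ltsAI P CHole P'.
Proof.
  intros H HP. exists CHole, P', PZero, P'. repeat split.
  - apply ltsA_tau; auto.
  - apply (proj1 (subst_pure PZero 1)). eapply red_pure; eauto.
  - apply sc_refl.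
Qed.

Lemma ltsAI_COut P a P' : pure P -> ltsAI P (COut a) P' -> lts P (AIn a) P' /\ pure P'.
Proof.
  intros HP [Ce [Qe [T [Qs [H1 [H2 [H3 [H4 H5]]]]]]]].
  destruct H1; simpl in H5; try discriminate.
  - injection H5; intros; subst.
    assert (Hp : pure (nus A (PPar (PSum (SPlus (SIn a Q) M)) R))) by (apply (proj1 scong_pure _ _ H); auto).
    rewrite pure_nus in Hp. simpl in Hp.
    assert (pure (nus A (PPar Q R))) by (rewrite pure_nus; simpl; tauto).
    rewrite (proj1 (subst_pure T 1)) in H3; auto. injection H3; intros; subst.
    split.
    + eapply lts_struct. apply H. apply lts_nus. apply lts_par. apply lts_in.
      simpl. intros x Hx [E|[]]; subst; auto. auto.
    + apply (proj1 scong_pure _ _ H4); auto.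
Qed.

Lemma ltsAI_CIn P a T P' : pure P -> ltsAI P (CIn a T) P' ->
  pure T /\ exists P1, lts P (AOut a) P1 /\ scong P' (PPar P1 T) /\ pure P1.
Proof.
  intros HP [Ce [Qe [T0 [Qs [H1 [H2 [H3 [H4 H5]]]]]]]].
  destruct H1; simpl in H5; try discriminate.
  simpl in H5. injection H5; intros; subst.
  assert (Hp : pure (nus A (PPar (POut a) Q))) by (apply (proj1 scong_pure _ _ H); auto).
  rewrite pure_nus in Hp. simpl in Hp.
  destruct (subst_nus_var A Q T Qs (proj2 Hp) H3) as [-> HA].
  split; auto. exists (nus A Q). repeat split.
  - eapply lts_struct. apply H. apply lts_nus. apply lts_par. apply lts_out.
    simpl. intros x Hx [E|[]]; subst; auto.
    eapply sc_trans. apply scong_nus, sc_par_comm. apply scong_nus, sc_par_unit.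
  - eapply sc_trans. apply sc_sym, H4. apply sc_sym, nus_par; auto.
  - rewrite pure_nus; tauto.
Qed.

Lemma lts_out_ltsAI P a T P1 : pure P -> pure T -> lts P (AOut a) P1 -> ltsAI P (CIn a T) (PPar P1 T).
Proof.
  intros HP HT H.
  assert (pure P1) by (eapply lts_pure; eauto).
  exists (CIn a (PVar 1)), (nus [] (PPar P1 (PVar 1))), T, (PPar P1 T). repeat split; auto.
  - apply ltsA_snd. simpl. eapply sc_trans. apply lts_out_inv; eauto. apply sc_par_comm. simpl; auto.
  - simpl. rewrite (proj1 (subst_pure T 1)); auto.
  - apply sc_refl.
Qed.

Lemma ltsAI_scong P' P C X : scong P' P -> ltsAI P C X -> ltsAI P' C X.
Proof.
  intros HS [Ce [Qe [T [Qs [H1 [H2 [H3 [H4 H5]]]]]]]].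
  exists Ce, Qe, T, Qs. repeat split; auto.
  destruct H1.
  - apply ltsA_tau. eapply red_struct; eauto using sc_refl.
  - eapply ltsA_rcv; eauto using sc_trans.
  - eapply ltsA_snd; eauto using sc_trans.
Qed.

Lemma swap_nus b c A X : (forall x, In x A -> x <> b /\ x <> c) -> swap b c (nus A X) = nus A (swap b c X).
Proof. induction A; simpl; intros H; auto. destruct (H a (or_introl eq_refl)).
  rewrite swapn_id; auto. rewrite IHA; auto. Qed.


Lemma st_in_shape P mu P1 : st P mu P1 -> forall a, mu = AIn a -> forall S, exists A Q M R,
  ~In a A /\ (forall x, In x A -> ~In x S) /\
  scong P (nus A (PPar (PSum (SPlus (SIn a Q) M)) R)) /\ scong P1 (nus A (PPar Q R)).
Proof.
  induction 1; intros b E S; subst; try discriminate.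
  - destruct (stM_rearr _ _ _ H) as [pre [M' [H1 [[-> E']|[a [-> E']]]]]]; try discriminate.
    injection E'; intros; subst.
    exists [], P, M', PZero. simpl. repeat split; auto.
    + eapply sc_trans. apply sc_sum, H1. apply sc_sym, sc_par_unit.
    + apply sc_sym, sc_par_unit.
  - rename a into b0. simpl in H0.
    generalize (fresh_notin (b :: b0 :: S ++ fn P ++ fn Q)); generalize (fresh (b :: b0 :: S ++ fn P ++ fn Q)); intros c Hc.
    simpl in Hc. rewrite !in_app_iff in Hc.
    destruct (IHst b eq_refl (b0 :: c :: S)) as [A [Q0 [M [R [HA [HS [H1 H2]]]]]]].
    assert (HAbc : forall x, In x A -> x <> b0 /\ x <> c).
    { intros x Hx; specialize (HS x Hx); simpl in HS; split; intro; subst; tauto. }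
    assert (Hbb : swapn b0 c b = b) by (apply swapn_id; intro; subst; tauto).
    exists (c :: A), (swap b0 c Q0), (swapM b0 c M), (swap b0 c R).
    repeat split.
    + simpl. intros [E|E]; [subst; tauto | auto].
    + simpl. intros x [E|E]; [subst; tauto|]. intro; apply (HS x E); simpl; auto.
    + eapply sc_trans. apply sc_nu, H1. eapply sc_trans. apply sc_alpha with (b := c).
      * simpl. rewrite in_filter_neq. intros [Hin _].
        apply (proj1 scong_fn _ _ H1) in Hin. tauto.
      * simpl. rewrite swap_nus; auto. simpl. rewrite Hbb. apply sc_refl.
    + eapply sc_trans. apply sc_nu, H2. eapply sc_trans. apply sc_alpha with (b := c).
      * simpl. rewrite in_filter_neq. intros [Hin _].
        apply (proj1 scong_fn _ _ H2) in Hin. tauto.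
      * simpl. rewrite swap_nus; auto. apply sc_refl.
  - destruct (IHst b eq_refl (S ++ fn Q)) as [A [Q0 [M [R [HA [HS [H1 H2]]]]]]].
    assert (HF : forall x, In x A -> ~In x (fn Q)) by (intros x Hx Hin; apply (HS x Hx); apply in_app_iff; auto).
    exists A, Q0, M, (PPar R Q). repeat split; auto.
    + intros x Hx Hin; apply (HS x Hx); apply in_app_iff; auto.
    + eapply sc_trans. apply sc_par. apply H1. apply sc_refl. eapply sc_trans. apply nus_par; auto.
      apply scong_nus, sc_par_assoc.
    + eapply sc_trans. apply sc_par. apply H2. apply sc_refl. eapply sc_trans. apply nus_par; auto.
      apply scong_nus, sc_par_assoc.
  - destruct (IHst b eq_refl (S ++ fn P)) as [A [Q0 [M [R [HA [HS [H1 H2]]]]]]].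
    assert (HF : forall x, In x A -> ~In x (fn P)) by (intros x Hx Hin; apply (HS x Hx); apply in_app_iff; auto).
    exists A, Q0, M, (PPar R P). repeat split; auto.
    + intros x Hx Hin; apply (HS x Hx); apply in_app_iff; auto.
    + eapply sc_trans. apply sc_par_comm. eapply sc_trans. apply sc_par. apply H1. apply sc_refl.
      eapply sc_trans. apply nus_par; auto. apply scong_nus, sc_par_assoc.
    + eapply sc_trans. apply sc_par_comm. eapply sc_trans. apply sc_par. apply H2. apply sc_refl.
      eapply sc_trans. apply nus_par; auto. apply scong_nus, sc_par_assoc.
Qed.

Lemma lts_in_ltsAI P a P1 : pure P -> lts P (AIn a) P1 -> exists P2, ltsAI P (COut a) P2 /\ scong P2 P1 /\ pure P2.
Proof.
  intros HP H. destruct (lts_st _ _ _ H) as [X [H1 H2]].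
  destruct (st_in_shape _ _ _ H1 a eq_refl []) as [A [Q [M [R [HA [_ [H3 H4]]]]]]].
  assert (Hp : pure (nus A (PPar (PSum (SPlus (SIn a Q) M)) R))) by (apply (proj1 scong_pure _ _ H3); auto).
  rewrite pure_nus in Hp. simpl in Hp.
  assert (Hp2 : pure (nus A (PPar Q R))) by (rewrite pure_nus; simpl; tauto).
  exists (nus A (PPar Q R)). repeat split; auto.
  - exists (COut a), (nus A (PPar Q R)), PZero, (nus A (PPar Q R)). repeat split; auto.
    + eapply ltsA_rcv; eauto.
    + apply (proj1 (subst_pure PZero 1)); auto.
    + apply sc_refl.
  - eapply sc_trans. apply sc_sym, H4. auto.
Qed.

Definition AB := async_bisimilar.

Lemma AB_bisim : async_bisim AB.
Proof.
  split.
  - intros P Q [R [[Hs HR] H]]. exists R; split; auto. split; auto.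
  - intros P Q [R [[Hs HR] H]]. destruct (HR _ _ H) as [H1 [H2 H3]].
    repeat split.
    + intros P' HP. destruct (H1 _ HP) as [Q' [? ?]]. exists Q'; split; auto. exists R; split; auto. split; auto.
    + intros a P' HP. destruct (H2 _ _ HP) as [Q' [? ?]]. exists Q'; split; auto. exists R; split; auto. split; auto.
    + intros a P' HP. destruct (H3 _ _ HP) as [[Q' [? ?]]|[Q' [? ?]]].
      * left. exists Q'; split; auto. exists R; split; auto. split; auto.
      * right. exists Q'; split; auto. exists R; split; auto. split; auto.
Qed.

Lemma AB_scong X P Q Y : scong X P -> AB P Q -> scong Q Y -> AB X Y.
Proof.
  intros H1 H2 H3.
  exists (fun X Y => exists P Q, scong X P /\ AB P Q /\ scong Q Y). split; [|eauto].
  split.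
  - intros A B [P' [Q' [? [? ?]]]]. exists Q', P'. repeat split; auto using sc_sym.
    apply (proj1 AB_bisim); auto.
  - intros A B [P' [Q' [HA [HPQ HB]]]].
    destruct (proj2 AB_bisim _ _ HPQ) as [C1 [C2 C3]]. repeat split.
    + intros A' HA'. destruct (C1 A') as [B' [? ?]].
      eapply lts_struct. apply sc_sym, HA. apply HA'. apply sc_refl.
      exists B'; split. eapply lts_struct. apply sc_sym, HB. eauto. apply sc_refl.
      exists A', B'; repeat split; auto using sc_refl.
    + intros a A' HA'. destruct (C2 a A') as [B' [? ?]].
      eapply lts_struct. apply sc_sym, HA. apply HA'. apply sc_refl.
      exists B'; split. eapply lts_struct. apply sc_sym, HB. eauto. apply sc_refl.
      exists A', B'; repeat split; auto using sc_refl.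
    + intros a A' HA'. destruct (C3 a A') as [[B' [? ?]]|[B' [? ?]]].
      eapply lts_struct. apply sc_sym, HA. apply HA'. apply sc_refl.
      * left. exists B'; split. eapply lts_struct. apply sc_sym, HB. eauto. apply sc_refl.
        exists A', B'; repeat split; auto using sc_refl.
      * right. exists B'; split. eapply lts_struct. apply sc_sym, HB. eauto. apply sc_refl.
        exists A', (PPar B' (POut a)); repeat split; auto using sc_refl.
Qed.

Definition R2 X Y := exists P Q T, AB P Q /\ scong X (PPar P T) /\ scong Y (PPar Q T).

Lemma R2_scong X X' Y : R2 X Y -> scong X X' -> R2 X' Y.
Proof. intros [P [Q [T [H1 [H2 H3]]]]] H. exists P, Q, T; repeat split; eauto using sc_trans, sc_sym. Qed.

Lemma AB_par_step P Q T mu Z : AB P Q -> st (PPar P T) mu Z ->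
   (exists Q', lts (PPar Q T) mu Q' /\ R2 Z Q') \/
   (exists a, mu = AIn a /\ exists Q', lts (PPar Q T) ATau Q' /\ R2 Z (PPar Q' (POut a))).
Proof.
  intros HAB H. destruct (proj2 AB_bisim _ _ HAB) as [C1 [C2 C3]].
  inversion H; subst; clear H.
  - apply st_lts in H4. destruct mu.
    + destruct (C1 _ H4) as [Q1 [? ?]]. left. exists (PPar Q1 T); split. apply lts_par; auto.
      exists P', Q1, T; repeat split; auto using sc_refl.
    + destruct (C3 _ _ H4) as [[Q1 [? ?]]|[Q1 [? ?]]].
      * left. exists (PPar Q1 T); split. apply lts_par; auto.
        exists P', Q1, T; repeat split; auto using sc_refl.
      * right. exists a; split; auto. exists (PPar Q1 T); split. apply lts_par; auto.
        exists P', (PPar Q1 (POut a)), T; repeat split; auto using sc_refl.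
        eapply sc_trans. apply sc_par_assoc. eapply sc_trans. apply sc_par. apply sc_refl. apply sc_par_comm.
        apply sc_sym, sc_par_assoc.
    + destruct (C2 _ _ H4) as [Q1 [? ?]]. left. exists (PPar Q1 T); split. apply lts_par; auto.
      exists P', Q1, T; repeat split; auto using sc_refl.
  - apply st_lts in H4. left. exists (PPar Q Q'); split.
    eapply lts_struct. apply sc_par_comm. apply lts_par; eauto. apply sc_par_comm.
    exists P, Q, Q'; repeat split; auto using sc_refl.
  - pose proof (st_out_inv _ _ _ H5 a eq_refl) as HT.
    apply st_lts in H2. apply st_lts in H5.
    destruct (C3 _ _ H2) as [[Q1 [? ?]]|[Q1 [? ?]]].
    + left. exists (PPar Q1 Q'); split. eapply lts_comm; eauto.
      exists P', Q1, Q'; repeat split; auto using sc_refl.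
    + left. exists (PPar Q1 T); split. apply lts_par; auto.
      exists P', (PPar Q1 (POut a)), Q'; repeat split; auto using sc_refl.
      eapply sc_trans. apply sc_par. apply sc_refl. apply HT.
      eapply sc_trans. apply sc_par. apply sc_refl. apply sc_par_comm. apply sc_sym, sc_par_assoc.
  - apply st_lts in H2. apply st_lts in H5.
    destruct (C2 _ _ H2) as [Q1 [? ?]].
    left. exists (PPar Q1 Q'); split.
    eapply lts_struct. apply sc_par_comm. eapply lts_comm; eauto. apply sc_par_comm.
    exists P', Q1, Q'; repeat split; auto using sc_refl.
Qed.

Lemma AB_par P Q T : AB P Q -> AB (PPar P T) (PPar Q T).
Proof.
  intros H. exists R2. split; [| exists P, Q, T; repeat split; auto using sc_refl].
  split.
  - intros X Y [P0 [Q0 [T0 [H1 [H2 H3]]]]]. exists Q0, P0, T0; repeat split; auto.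
    apply (proj1 AB_bisim); auto.
  - intros X Y [P0 [Q0 [T0 [H1 [H2 H3]]]]].
    assert (Hgen : forall mu X', lts X mu X' ->
      (exists Q', lts Y mu Q' /\ R2 X' Q') \/
      (exists a, mu = AIn a /\ exists Q', lts Y ATau Q' /\ R2 X' (PPar Q' (POut a)))).
    { intros mu X' HX. assert (HX2 : lts (PPar P0 T0) mu X') by (apply lts_struct with X X'; [apply sc_sym; auto | auto | apply sc_refl]).
      destruct (lts_st _ _ _ HX2) as [Z [HZ1 HZ2]].
      destruct (AB_par_step _ _ _ _ _ H1 HZ1) as [[Q' [? ?]]|[a [? [Q' [? ?]]]]].
      - left. exists Q'; split. apply lts_struct with (PPar Q0 T0) Q'; auto using sc_refl. eapply R2_scong; eauto.
      - right. exists a; split; auto. exists Q'; split. apply lts_struct with (PPar Q0 T0) Q'; auto using sc_refl. eapply R2_scong; eauto. }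
    repeat split.
    + intros X' HX. destruct (Hgen _ _ HX) as [?|[a [E _]]]; auto; discriminate.
    + intros a X' HX. destruct (Hgen _ _ HX) as [?|[b [E _]]]; auto; discriminate.
    + intros a X' HX. destruct (Hgen _ _ HX) as [?|[b [E ?]]]; auto. injection E; intros; subst. auto.
Qed.

Definition LB := L_bisimilar LA.

Lemma part1 P Q : pure P -> pure Q -> AB P Q -> LB P Q.
Proof.
  intros HP HQ H. exists (fun X Y => pure X /\ pure Y /\ AB X Y). split; [|auto].
  split.
  - intros X Y [? [? ?]]. repeat split; auto. apply (proj1 AB_bisim); auto.
  - intros X Y C X' [HX [HY HAB]] HT.
    destruct (proj2 AB_bisim _ _ HAB) as [C1 [C2 C3]].
    destruct (ltsAI_cases _ _ _ HT) as [->|[[a ->]|[a [T [-> HTp]]]]].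
    + destruct (ltsAI_CHole _ _ HX HT) as [Hr Hp].
      destruct (C1 _ (red_lts _ _ Hr)) as [Y' [HY' HA']].
      split.
      * intros _. exists Y'. split. apply red_ltsAI; auto. apply lts_red; auto.
        repeat split; auto. eapply lts_pure; eauto.
      * intros NL; exfalso; apply NL; left; auto.
    + destruct (ltsAI_COut _ _ _ HX HT) as [Hl Hp].
      split.
      * intros [E|[a0 [T [_ E]]]]; discriminate.
      * intros _. destruct (C3 _ _ Hl) as [[Y' [? ?]]|[Y' [? ?]]].
        -- exists Y'. split. apply lts_in_red; auto. repeat split; auto. eapply lts_pure; eauto.
        -- exists (PPar Y' (POut a)). split. apply red_par, lts_red; auto.
           repeat split; auto; eapply lts_pure; eauto.
    + destruct (ltsAI_CIn _ _ _ _ HX HT) as [_ [X1 [Hl [Hs Hp]]]].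
      destruct (C2 _ _ Hl) as [Y1 [HY1 HA1]].
      split.
      * intros _. exists (PPar Y1 T). split. apply lts_out_ltsAI; auto.
        split; [|split].
        -- apply (proj1 scong_pure _ _ (sc_sym _ _ Hs)). simpl; auto.
        -- simpl; split; auto. eapply lts_pure; eauto.
        -- apply AB_scong with (PPar X1 T) (PPar Y1 T); auto using sc_refl. apply AB_par; auto.
      * intros NL; exfalso; apply NL; right; eauto.
Qed.

Lemma LB_bisim : L_bisim LA LB.
Proof.
  split.
  - intros P Q [R [[Hs HR] H]]. exists R; split; auto. split; auto.
  - intros P Q C P' [R [[Hs HR] H]] HT. destruct (HR _ _ _ _ H HT) as [H1 H2]. split.
    + intros HL. destruct (H1 HL) as [Q' [? ?]]. exists Q'; split; auto. exists R; split; auto. split; auto.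
    + intros HL. destruct (H2 HL) as [Q' [? ?]]. exists Q'; split; auto. exists R; split; auto. split; auto.
Qed.

Lemma apply_ctx_scong C X Y : scong X Y -> scong (apply_ctx C X) (apply_ctx C Y).
Proof. destruct C; simpl; intros; auto; apply sc_par; auto using sc_refl. Qed.

Lemma LB_scong X P Q Y : scong X P -> LB P Q -> scong Q Y -> LB X Y.
Proof.
  intros H1 H2 H3.
  exists (fun X Y => exists P Q, scong X P /\ LB P Q /\ scong Q Y). split; [|eauto].
  split.
  - intros A B [P' [Q' [? [? ?]]]]. exists Q', P'. repeat split; auto using sc_sym.
    apply (proj1 LB_bisim); auto.
  - intros A B C A' [P' [Q' [HA [HPQ HB]]]] HT.
    apply ltsAI_scong with (P' := P') in HT; [|apply sc_sym; auto].
    destruct (proj2 LB_bisim _ _ _ _ HPQ HT) as [C1 C2]. split.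
    + intros HL. destruct (C1 HL) as [B' [? ?]]. exists B'; split.
      apply ltsAI_scong with Q'; [apply sc_sym; auto | auto]. exists A', B'; repeat split; auto using sc_refl.
    + intros HL. destruct (C2 HL) as [B' [? ?]]. exists B'; split.
      eapply red_struct. apply apply_ctx_scong, sc_sym, HB. eauto. apply sc_refl.
      exists A', B'; repeat split; auto using sc_refl.
Qed.

Lemma part2 P Q : pure P -> pure Q -> LB P Q -> AB P Q.
Proof.
  intros HP HQ H. exists (fun X Y => pure X /\ pure Y /\ LB X Y). split; [|auto].
  split.
  - intros X Y [? [? ?]]. repeat split; auto. apply (proj1 LB_bisim); auto.
  - intros X Y [HX [HY HLB]].
    assert (HB := proj2 LB_bisim X Y).
    repeat split.
    + intros X' HT. pose proof (lts_red _ _ HT) as Hr.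
      destruct (HB CHole X' HLB (red_ltsAI _ _ Hr HX)) as [C1 _].
      destruct (C1 (or_introl eq_refl)) as [Y' [HY' HL']].
      destruct (ltsAI_CHole _ _ HY HY') as [Hr' Hp'].
      exists Y'; split. apply red_lts; auto. repeat split; auto. eapply lts_pure; eauto.
    + intros a X' HT.
      assert (HP0 : pure PZero) by exact I.
      destruct (HB (CIn a PZero) _ HLB (lts_out_ltsAI _ _ _ _ HX HP0 HT)) as [C1 _].
      destruct (C1 (or_intror (ex_intro _ a (ex_intro _ PZero (conj HP0 eq_refl))))) as [Y' [HY' HL']].
      destruct (ltsAI_CIn _ _ _ _ HY HY') as [_ [Y1 [Hl [Hs Hp]]]].
      exists Y1; split; auto. repeat split; auto. eapply lts_pure; eauto.
      eapply LB_scong. apply sc_sym, sc_par_unit. apply HL'. eapply sc_trans. apply Hs. apply sc_par_unit.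
    + intros a X' HT.
      destruct (lts_in_ltsAI _ _ _ HX HT) as [X2 [HT2 [Hs2 Hp2]]].
      destruct (HB _ _ HLB HT2) as [_ C2].
      assert (NL : ~ LA (COut a)) by (intros [E|[a0 [T [_ E]]]]; discriminate).
      destruct (C2 NL) as [Y' [Hr HL']]. simpl in Hr.
      destruct (lts_st _ _ _ (red_lts _ _ Hr)) as [Z [HZ1 HZ2]].
      assert (HX' : pure X') by (eapply lts_pure; eauto).
      inversion HZ1; subst; clear HZ1; inv_st.
      * right. exists P'. match goal with Hs : st Y ATau P' |- _ => apply st_lts in Hs end.
        split; auto. split; [auto|split].
        -- simpl; split; auto. eapply lts_pure; eauto.
        -- eapply LB_scong. apply sc_sym, Hs2. apply HL'. apply sc_sym; auto.
      * left. exists P'. match goal with Hs : st Y (AIn _) P' |- _ => apply st_lts in Hs end.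
        split; auto. split; [auto|split].
        -- eapply lts_pure; eauto.
        -- eapply LB_scong. apply sc_sym, Hs2. apply HL'. eapply sc_trans. apply sc_sym, HZ2. apply sc_par_unit.
Qed.

Theorem mainTheorem7 :
  forall P Q : proc, pure P -> pure Q ->
    (L_bisimilar LA P Q <-> async_bisimilar P Q).
Proof.
  intros P Q HP HQ. split; intros H.
  - apply part2; auto.
  - apply part1; auto.
Qed.
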